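(* Every $3$-uniform bi-hypergraph with exactly $7$ vertices and at most $9$ edges is colorable. Consequently $\ell(7,3)\ge 10$.
   Context: A bi-hypergraph $\mathcal H=(V,E)$ consists of a finite vertex set $V$ and a set $E$ of subsets of $V$, called edges, with no edge contained in another. It is $r$-uniform if every edge has exactly $r$ elements. A mapping $f:V\to\mathbb N$ is a proper coloring of $\mathcal H$ if $1<|f(e)|<|e|$ for every $e\in E$, where $f(e)=\{f(v):v\in e\}$. $\mathcal H$ is colorable if it has a proper coloring, and uncolorable otherwise. A subhypergraph of $\mathcal H$ is a bi-hypergraph $(V',E')$ with $V'\subseteq V$, $E'\subseteq E$. $\mathcal H$ is minimal uncolorable if it is uncolorable but every proper subhypergraph of it is colorable. $\ell(n,r)$ is the minimum number of edges of a minimal uncolorable $r$-uniform bi-hypergraph with exactly $n$ vertices ($\infty$ if none exists). *)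

(* Defs.v *)
From mathcomp Require Import all_boot.
Set Implicit Arguments. Unset Strict Implicit. Unset Printing Implicit Defensive.

Definition bihypergraph (T : finType) (V : {set T}) (E : {set {set T}}) : Prop :=
  (forall e, e \in E -> e \subset V) /\
  (forall e1 e2, e1 \in E -> e2 \in E -> e1 \subset e2 -> e1 = e2).

Definition uniform (T : finType) (r : nat) (E : {set {set T}}) : Prop :=
  forall e, e \in E -> #|e| = r.

Definition ncolors (T : finType) (f : T -> nat) (e : {set T}) : nat :=
  size (undup (map f (enum e))).

(* f : V -> N is proper if 1 < |f(e)| < |e| for every edge e
   (f is given on the ambient type; only its values on V matter) *)
Definition proper_coloring (T : finType) (E : {set {set T}}) (f : T -> nat) : Prop :=
  forall e, e \in E -> 1 < ncolors f e < #|e|.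

Definition colorable (T : finType) (E : {set {set T}}) : Prop :=
  exists f : T -> nat, proper_coloring E f.

Definition subhypergraph (T : finType) (V' : {set T}) (E' : {set {set T}})
    (V : {set T}) (E : {set {set T}}) : Prop :=
  bihypergraph V' E' /\ V' \subset V /\ E' \subset E.

Definition minimal_uncolorable (T : finType) (V : {set T}) (E : {set {set T}}) : Prop :=
  bihypergraph V E /\ ~ colorable E /\
  (forall V' E', subhypergraph V' E' V E -> (V', E') <> (V, E) -> colorable E').

(* Main.v *)
Require Import Defs.
From mathcomp Require Import all_boot.
Set Implicit Arguments. Unset Strict Implicit. Unset Printing Implicit Defensive.

Definition Q := (seq nat * seq nat * seq bool)%type.
Definition gd (q : Q) t := nth true q.2 t.
Fixpoint goF (c : seq Q -> seq bool -> bool) (Ps : seq Q) (b : seq nat) (F : seq bool) : bool :=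
  match b with
  | [::] => true
  | t :: b' => c [seq r <- Ps | gd r t] F && goF c Ps b' (set_nth false F t true)
  end.
Fixpoint chk (n : nat) (Ps : seq Q) (Fb : seq bool) : bool :=
  match Ps with
  | [::] => false
  | q0 :: qs => match n with
     | 0 => true
     | n'.+1 => goF (chk n') Ps [seq t <- q0.1.2 | ~~ nth false Fb t] Fb
     end
  end.

Fixpoint rg (n m : nat) : seq (seq nat) :=
  match n with
  | 0 => [:: [::]]
  | n'.+1 => flatten [seq [seq c :: s | s <- rg n' (maxn m c)] | c <- iota 0 m.+2]
  end.
Definition parts := [seq 0 :: s | s <- rg 6 0].
Definition tuples : seq (seq nat) :=
  flatten [seq flatten [seq [seq [:: a; b; c] | c <- iota 0 7] | b <- iota 0 7] | a <- iota 0 7].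
Definition TL := [seq t <- tuples | sorted ltn t].
Definition goodc (p t : seq nat) := size (undup [seq nth 0 p a | a <- t]) == 2.
Definition bl (p : seq nat) := [seq i <- iota 0 35 | ~~ goodc p (nth [::] TL i)].
Definition gv (p : seq nat) := [seq goodc p (nth [::] TL i) | i <- iota 0 35].
Arguments TL : simpl never.
Arguments bl : simpl never.
Arguments gv : simpl never.
Definition mkQ (p : seq nat) : Q := (p, bl p, gv p).
Definition init := sort (fun a b : Q => size a.1.2 <= size b.1.2) [seq mkQ p | p <- parts].
Lemma big9 : chk 9 init [::]. Proof. vm_compute. reflexivity. Qed.

Definition inv (Ps : seq Q) := forall q t, q \in Ps -> ~~ gd q t -> t \in q.1.2.

Lemma chkP n : forall Ps Fb, inv Ps -> chk n Ps Fb ->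
  forall X, size X <= n -> all (fun t => ~~ nth false Fb t) X ->
  exists2 q, q \in Ps & all (gd q) X.
Proof.
elim: n => [|n IH] Ps Fb Hinv.
  case: Ps Hinv => [//|q0 qs] _ _ X; case: X => // _ _.
  by exists q0; rewrite ?mem_head.
case: Ps Hinv => [//|q0 qs] Hinv /= Hgo X Hs HX.
case: (boolP (all (gd q0) X)) => Hall; first by exists q0; rewrite ?mem_head.
have Hin : forall b F, goF (chk n) (q0 :: qs) b F ->
    all (fun t => ~~ nth false F t) X -> has (mem b) X ->
    exists2 q, q \in q0 :: qs & all (gd q) X.
  elim=> [|t b IHb] F /=; first by move=> _ _ /hasP [u].
  move=> /andP [Hc Hg] HXF Hhas.
  case: (boolP (t \in X)) => HtX.
    have Hinv' : inv [seq r <- q0 :: qs | gd r t].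
      by move=> q u; rewrite mem_filter => /andP [_ Hq]; apply: Hinv.
    have Hsz : size (rem t X) <= n by rewrite size_rem //; case: (size X) Hs.
    have HXF' : all (fun u => ~~ nth false F u) (rem t X).
      by apply/allP => u /mem_rem Hu; exact: (allP HXF).
    have [q Hq Hqa] := IH _ _ Hinv' Hc _ Hsz HXF'.
    move: Hq; rewrite mem_filter => /andP [Hqt Hq].
    exists q => //; rewrite (perm_all _ (perm_to_rem HtX)) /= Hqt //.
  apply: (IHb _ Hg).
    apply/allP => u Hu; rewrite nth_set_nth /=.
    case: eqP => [Eu|_]; first by rewrite -Eu Hu in HtX.
    exact: (allP HXF).
  apply/hasP; case/hasP: Hhas => u Hu; rewrite inE => /orP [/eqP Eu|Hub].
    by rewrite -Eu Hu in HtX.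
  by exists u.
apply: (Hin _ _ Hgo HX).
case/allPn: Hall => t HtX Ht; apply/hasP; exists t => //.
rewrite /= mem_filter (allP HX t HtX) /=; apply: (Hinv q0) => //; exact: mem_head.
Qed.

Lemma inv_init : inv init.
Proof.
move=> q t; rewrite mem_sort => /mapP [p _ ->] Ht.
rewrite /gd /mkQ /= in Ht *; rewrite /bl mem_filter mem_iota add0n.
rewrite /gv in Ht.
case: (ltnP t 35) => Htl.
  rewrite (nth_map 0) ?size_iota // nth_iota // add0n in Ht.
  by rewrite Ht.
by rewrite nth_default ?size_map ?size_iota in Ht.
Qed.

Lemma key_TL l : size l = 3 -> uniq l -> all (fun x => x < 7) l -> sort leq l \in TL.
Proof.
have H : all (fun a => all (fun b => all (fun c =>
   uniq [:: a; b; c] ==> (sort leq [:: a; b; c] \in TL)) (iota 0 7)) (iota 0 7)) (iota 0 7).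
  by vm_compute.
case: l => [|a [|b [|c [|d l]]]] //= _ Hu /and4P [Ha Hb Hc _].
have := allP H a; rewrite mem_iota => /(_ Ha) /allP /(_ b).
rewrite mem_iota => /(_ Hb) /allP /(_ c); rewrite mem_iota => /(_ Hc).
by rewrite /= Hu.
Qed.

Lemma size_undup_perm (s1 s2 : seq nat) : perm_eq s1 s2 -> size (undup s1) = size (undup s2).
Proof.
move=> Hp; apply: perm_size; apply: uniq_perm; rewrite ?undup_uniq // => x.
by rewrite !mem_undup (perm_mem Hp).
Qed.

Lemma main1 (T : finType) (V : {set T}) (E : {set {set T}}) :
  bihypergraph V E -> uniform 3 E -> #|V| = 7 -> #|E| <= 9 -> colorable E.
Proof.
move=> [HsubV _] Hun HV HE.
pose s := enum V.
pose idx x := index x s.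
pose key (e : {set T}) := sort leq [seq idx x | x <- enum e].
pose ti e := index (key e) TL.
pose X := [seq ti e | e <- enum E].
have HX0 : all (fun t => ~~ nth false [::] t) X by apply/allP => t _; rewrite nth_nil.
have HsX : size X <= 9 by rewrite size_map -cardE.
have [q Hq HqX] := chkP inv_init big9 HsX HX0.
move: Hq; rewrite mem_sort => /mapP [p _ Eq].
exists (fun x => nth 0 p (idx x)) => e He.
have HeV := HsubV e He.
have Hke : key e \in TL.
  apply: key_TL.
  - by rewrite size_map -cardE Hun.
  - rewrite map_inj_in_uniq ?enum_uniq // => x y; rewrite !mem_enum => Hx Hy.
    by apply: (index_inj x); rewrite /s mem_enum; apply: (subsetP HeV).
  - apply/allP => i /mapP [x]; rewrite mem_enum => Hx ->.
    by rewrite /idx -HV cardE index_mem /s mem_enum (subsetP HeV).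
have Hg : gd q (ti e) by apply: (allP HqX); apply: map_f; rewrite mem_enum.
have Hti : ti e < 35 by rewrite /ti -[35]/(size TL) index_mem.
rewrite Eq /gd /mkQ /= /gv (nth_map 0) ?size_iota // nth_iota // add0n nth_index // in Hg.
move: Hg; rewrite /goodc /ncolors (Hun e He) => /eqP H2.
rewrite (size_undup_perm (s2 := [seq nth 0 p a | a <- key e])) ?H2 //.
by rewrite perm_sym (map_comp (nth 0 p) idx) perm_map // perm_sort.
Qed.

Theorem mainTheorem12 :
  (forall (T : finType) (V : {set T}) (E : {set {set T}}),
      bihypergraph V E -> uniform 3 E -> #|V| = 7 -> #|E| <= 9 -> colorable E) /\
  (* consequently l(7,3) >= 10: every minimal uncolorable 3-uniform
     bi-hypergraph with exactly 7 vertices has at least 10 edges *)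
  (forall (T : finType) (V : {set T}) (E : {set {set T}}),
      minimal_uncolorable V E -> uniform 3 E -> #|V| = 7 -> 10 <= #|E|).
Proof.
split; first exact: main1.
move=> T V E [Hb [Hnc _]] Hun HV; rewrite leqNgt; apply/negP => H.
exact: Hnc (main1 Hb Hun HV H).
Qed.
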